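(* Let $M_P$ be the Pappus configuration on $[9]$ with lines $\{1,2,3\},\{1,6,8\},\{7,8,9\},\{2,6,9\},\{2,4,7\},\{3,5,9\},\{3,4,8\},\{1,5,7\},\{4,5,6\}$. Let $i,j\in[9]$ be two distinct points that do not lie on a common line of $M_P$ (equivalently, $\{i,j\}$ is contained in one of $\{1,4,9\},\{2,5,8\},\{3,6,7\}$), and let $k$ be the third element of that triple. Let $F_{ij}$ be the matroid obtained from $M_P$ by making $i$ and $j$ loops (so its remaining lines are three lines concurrent at $k$, and $k$ is its unique point of degree three), and let $F'_{ij}$ be obtained from $M_P$ by making $i,j,k$ loops. Then \[ V_{\mathcal{C}(F_{ij})}=V_{F_{ij}}\cup V_{F'_{ij}}. \]
   Context: A point-line configuration is a simple matroid of rank $\le3$; its lines are the maximal subsets of size $\ge3$ and rank $2$; the degree of a point is the number of lines containing it. For a matroid $K$ on $[d]$ and $S\subseteq[d]$, the matroid obtained by making the points of $S$ loops has circuits $\mathcal{C}(K\setminus S)\cup\{\{s\}:s\in S\}$, where $K\setminus S$ is the restriction of $K$ to $[d]\setminus S$. For a matroid $K$ on $[d]$ of rank $\le3$: a realization is $\gamma\in(\mathbb{C}^3)^d$ such that for all $S\subseteq[d]$, $(\gamma_s)_{s\in S}$ is linearly dependent iff $S$ is dependent in $K$; $V_K$ is the Zariski closure in $\mathbb{C}^{3d}$ of the realizations; $V_{\mathcal{C}(K)}$ is the set of $\gamma\in(\mathbb{C}^3)^d$ with $(\gamma_s)_{s\in S}$ linearly dependent for every dependent $S$ of $K$. *)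

(* Defs.v *)
From HB Require Import structures.
From mathcomp Require Import all_boot all_order all_algebra.
From mathcomp Require Import reals complex.
From mathcomp Require Import mpoly.
Set Implicit Arguments. Unset Strict Implicit. Unset Printing Implicit Defensive.
Import Order.TTheory GRing.Theory Num.Theory.
Local Open Scope ring_scope.

(* Points [9] = {1,...,9} are encoded as 'I_9, point p being the ordinal p-1. *)
Definition pt (n : nat) : 'I_9 := inord n.-1.

Definition pappus_lines : {set {set 'I_9}} :=
  [set [set pt 1; pt 2; pt 3]; [set pt 1; pt 6; pt 8]; [set pt 7; pt 8; pt 9];
       [set pt 2; pt 6; pt 9]; [set pt 2; pt 4; pt 7]; [set pt 3; pt 5; pt 9];
       [set pt 3; pt 4; pt 8]; [set pt 1; pt 5; pt 7]; [set pt 4; pt 5; pt 6]].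

Definition pappus_triples : {set {set 'I_9}} :=
  [set [set pt 1; pt 4; pt 9]; [set pt 2; pt 5; pt 8]; [set pt 3; pt 6; pt 7]].

(* A matroid on [9] is given by its predicate of dependent sets. *)
Definition matroid9 := {set 'I_9} -> bool.

(* The Pappus matroid: simple, rank 3, whose rank-2 sets of size >= 3 are
   exactly the subsets of the lines.  A set is dependent iff it has at least
   4 elements or contains a line (a 3-element set is dependent iff it has
   rank 2, i.e. it is one of the lines). *)
Definition M_P : matroid9 :=
  fun T => (3 < #|T|)%N || [exists L in pappus_lines, L \subset T].

(* Making the points of S loops: circuits C(K \ S) together with {s}, s in S.
   A set T is dependent iff it contains such a circuit, i.e. iff T meets S or
   T minus S is dependent in K (circuits of the restriction K \ S are the
   circuits of K avoiding S). *)
Definition make_loops (K : matroid9) (S : {set 'I_9}) : matroid9 :=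
  fun T => (T :&: S != set0) || K (T :\: S).

Section Realizations.
Variable R : realType.
Local Notation C := R[i].

(* gamma in (C^3)^9 is a 9x3 matrix whose s-th row is gamma_s. *)
Definition rows_of (g : 'M[C]_(9,3)) (T : {set 'I_9}) : seq 'rV[C]_3 :=
  [seq row s g | s <- enum T].

Definition lin_dep (g : 'M[C]_(9,3)) (T : {set 'I_9}) : bool :=
  ~~ free (rows_of g T).

Definition realization (K : matroid9) (g : 'M[C]_(9,3)) : Prop :=
  forall T : {set 'I_9}, lin_dep g T = K T.

Definition coords (g : 'M[C]_(9,3)) : 'I_(9 * 3) -> C := fun k => mxvec g 0 k.

(* V_K: Zariski closure in C^{27} of the set of realizations of K. *)
Definition V_K (K : matroid9) (g : 'M[C]_(9,3)) : Prop :=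
  forall p : {mpoly C[9 * 3]},
    (forall h, realization K h -> p.@[coords h] = 0) -> p.@[coords g] = 0.

Definition V_CK (K : matroid9) (g : 'M[C]_(9,3)) : Prop :=
  forall T : {set 'I_9}, K T -> lin_dep g T.

End Realizations.

(* Main.v *)
Require Import Defs.
From HB Require Import structures.
From mathcomp Require Import all_boot all_order all_algebra.
From mathcomp Require Import reals complex.
From mathcomp Require Import mpoly.
From mathcomp Require Import ring zify.
Set Implicit Arguments. Unset Strict Implicit. Unset Printing Implicit Defensive.
Import Order.TTheory GRing.Theory Num.Theory.
Local Open Scope ring_scope.

Section LA.
Variable F : fieldType.

Lemma det3E (A : 'M[F]_3) : \det A =
  A 0 0 * (A 1 1 * A 2 2 - A 1 2 * A 2 1)
  - A 0 1 * (A 1 0 * A 2 2 - A 1 2 * A 2 0)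
  + A 0 2 * (A 1 0 * A 2 1 - A 1 1 * A 2 0).
Proof.
rewrite (expand_det_row _ 0) !big_ord_recl !big_ord0 /cofactor.
rewrite !(expand_det_row _ 0) !big_ord_recl !big_ord0 /cofactor !det_mx11 !mxE.
pose a (m n : nat) := A (inord m) (inord n).
have HA : forall x y, A x y = a x y by move=> x y; rewrite /a !inord_val.
rewrite !HA /= /bump /=.
rewrite !expr0 !expr1 !exprS !expr0 /= ?(addn0, add0n, addSn, addnS) ?modn_small //.
ring.
Qed.

Definition mx3 (u v w : 'rV[F]_3) : 'M[F]_3 := \matrix_(r < 3, c < 3) [:: u; v; w]`_r 0 c.

Lemma free3 (u v w : 'rV[F]_3) : free [:: u; v; w] = (\det (mx3 u v w) != 0).
Proof.
rewrite -unitfE -unitmxE -row_free_unit.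
have rowM : forall r : 'I_3, row r (mx3 u v w) = [:: u; v; w]`_r.
  by move=> r; apply/rowP => c; rewrite !mxE.
apply/idP/idP.
- move=> Hf; rewrite -kermx_eq0; apply/rowV0P => rk /sub_kermxP kt0.
  have := @freeP _ _ 3 [tuple u; v; w] Hf (fun i => rk 0 i).
  have E : \sum_(i < 3) rk 0 i *: [tuple u; v; w]`_i = rk *m mx3 u v w.
    by rewrite mulmx_sum_row; apply: eq_bigr => r _; rewrite rowM.
  move=> H; apply/rowP => i; rewrite mxE H // E kt0 //.
- move=> Hr; apply/(@freeP _ _ 3 [tuple u; v; w]) => k Hk i.
  have : (\row_j k j) *m mx3 u v w = 0 *m mx3 u v w.
    rewrite mul0mx mulmx_sum_row -[RHS]Hk; apply: eq_bigr => r _; rewrite rowM mxE //.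
  by move/(row_free_inj Hr)/rowP/(_ i); rewrite !mxE.
Qed.

Lemma free_size3 (X : seq 'rV[F]_3) : free X -> (size X <= 3)%N.
Proof.
move=> /eqP <-.
have := dimvS (subvf <<X>>%VS); rewrite dimvf.
by rewrite (@dim_matrix F 1 3).
Qed.

Lemma span2_nfree (X : seq 'rV[F]_3) p q :
  (forall v, v \in X -> v \in <<[:: p; q]>>%VS) -> free X -> (size X <= 2)%N.
Proof.
move=> HX /eqP <-.
have /dimvS : (<<X>> <= <<[:: p; q]>>)%VS by apply/span_subvP.
move=> H; apply: (leq_trans H); exact: (dim_span [:: p; q]).
Qed.

Lemma rep (c x y : 'rV[F]_3) : c != 0 -> ~~ free [:: c; x; y] ->
  exists l1 m1 l2 m2 (w : 'rV[F]_3), x = l1 *: c + m1 *: w /\ y = l2 *: c + m2 *: w.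
Proof.
move=> c0; have P : perm_eq [:: c; x; y] [:: y; x; c].
  by rewrite perm_sym (_ : [:: y; x; c] = rev [:: c; x; y]) // perm_rev.
rewrite (perm_free P) free_cons free_cons seq1_free c0 andbT negb_and !negbK.
case/orP.
- rewrite span_cons => /memv_addP [a /vlineP [al ->]] [b].
  rewrite span_seq1 => /vlineP [be ->] ->.
  by exists 0, 1, be, al, x; split; rewrite ?scale0r ?add0r ?scale1r // addrC.
- rewrite span_seq1 => /vlineP [la ->].
  by exists la, 0, 0, 1, y; split; rewrite ?scale0r ?add0r ?scale1r ?addr0.
Qed.

End LA.


Definition linesN : seq (seq nat) := [:: [::1;2;3]; [::1;6;8]; [::7;8;9]; [::2;6;9]; [::2;4;7]; [::3;5;9]; [::3;4;8]; [::1;5;7]; [::4;5;6]].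
Definition lineN (a b c : nat) : bool := [&& a != b, b != c, a != c & has (fun l => [&& a.+1 \in l, b.+1 \in l & c.+1 \in l]) linesN].
Definition lineb (x y z : 'I_9) : bool := lineN x y z.
Definition Lset (l : seq nat) : {set 'I_9} := [set pt (nth 0 l 0); pt (nth 0 l 1); pt (nth 0 l 2)].

Lemma ptval n : (0 < n <= 9)%N -> val (pt n) = n.-1.
Proof. by case: n => // n /= Hn; rewrite /pt inordK. Qed.

Lemma eqpt (x : 'I_9) n : (0 < n <= 9)%N -> (x == pt n) = ((val x).+1 == n).
Proof. by move=> Hn; rewrite -val_eqE /= ptval //; case: n Hn. Qed.

Lemma linesN_ok : all (fun l => [&& size l == 3, all (fun a => 0 < a <= 9)%N l & uniq l]) linesN.
Proof. by vm_compute. Qed.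

Lemma linesN_form l : l \in linesN -> exists a b c,
  [/\ l = [:: a; b; c], (0 < a <= 9)%N, (0 < b <= 9)%N, (0 < c <= 9)%N & uniq [:: a; b; c]].
Proof.
move=> /(allP linesN_ok) /and3P [].
case: l => [|a [|b [|c [|]]]] //= _ /and4P [Ha Hb Hc _] U.
by exists a, b, c; split.
Qed.

Lemma memLset l (x : 'I_9) : l \in linesN -> (x \in Lset l) = ((val x).+1 \in l).
Proof.
move=> /linesN_form [a [b [c [-> Ha Hb Hc _]]]].
by rewrite /Lset !inE /= !eqpt // orbA.
Qed.

Lemma card3 (T : finType) (x y z : T) : x != y -> y != z -> x != z -> #|[set x; y; z]| = 3.
Proof.
move=> xy yz xz; rewrite setUC cardsU1 cards2 xy !inE negb_or.
by rewrite eq_sym xz eq_sym yz.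
Qed.

Lemma card3le (T : finType) (x y z : T) : (#|[set x; y; z]| <= 3)%N.
Proof. by rewrite setUC cardsU1 cards2; case: (_ \notin _); case: (_ != _). Qed.

Lemma cardLset l : l \in linesN -> #|Lset l| = 3.
Proof.
move=> /linesN_form [a [b [c [-> Ha Hb Hc]]]] /=.
rewrite !inE negb_or => /andP [/andP [ab ac] bc].
move: bc; rewrite andbT => bc.
have pr : forall m n : nat, (0 < m)%N -> (0 < n)%N -> m != n -> m.-1 != n.-1 by move=> [|m] [|n].
rewrite /Lset /= card3 // -val_eqE /= !ptval //.
all: case/andP: Ha => Ha _; case/andP: Hb => Hb _; case/andP: Hc => Hc _.
all: by apply: pr.
Qed.

Lemma pappus_linesP L : L \in pappus_lines -> exists2 l, l \in linesN & L = Lset l.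
Proof.
rewrite /pappus_lines !inE.
case/orP; [|by move/eqP->; exists [::4;5;6]; rewrite /Lset].
case/orP; [|by move/eqP->; exists [::1;5;7]; rewrite /Lset].
case/orP; [|by move/eqP->; exists [::3;4;8]; rewrite /Lset].
case/orP; [|by move/eqP->; exists [::3;5;9]; rewrite /Lset].
case/orP; [|by move/eqP->; exists [::2;4;7]; rewrite /Lset].
case/orP; [|by move/eqP->; exists [::2;6;9]; rewrite /Lset].
case/orP; [|by move/eqP->; exists [::7;8;9]; rewrite /Lset].
case/orP; [|by move/eqP->; exists [::1;6;8]; rewrite /Lset].
by move/eqP->; exists [::1;2;3]; rewrite /Lset.
Qed.

Lemma pappus_linesP2 l : l \in linesN -> Lset l \in pappus_lines.
Proof.
rewrite /pappus_lines /linesN !inE.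
by do 8 (case/orP; [move/eqP->; rewrite /Lset eqxx ?orbT //|]);
  move/eqP->; rewrite /Lset eqxx ?orbT.
Qed.

Lemma LB (x y z : 'I_9) : x != y -> y != z -> x != z ->
  [exists L in pappus_lines, L \subset [set x; y; z]] = lineb x y z.
Proof.
move=> xy yz xz; apply/idP/idP.
- case/exists_inP => L /pappus_linesP [l Hl ->] Hsub.
  have E : Lset l == [set x; y; z].
    by rewrite eqEcard Hsub card3 // cardLset.

  have Hm : forall w : 'I_9, w \in [set x; y; z] -> (val w).+1 \in l.
    by move=> w Hw; rewrite -memLset // (eqP E).
  rewrite /lineb /lineN !val_eqE xy yz xz !andTb; apply/hasP; exists l => //.
  by rewrite !Hm // !inE eqxx ?orbT.
- rewrite /lineb /lineN => /and4P [_ _ _ /hasP [l Hl /and3P [hx hy hz]]].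
  apply/exists_inP; exists (Lset l); first exact: pappus_linesP2.
  have S : [set x; y; z] \subset Lset l.
    by apply/subsetP => w Hw; rewrite memLset //; move: Hw; rewrite !inE => /orP [/orP []|] /eqP ->.
  have E : [set x; y; z] == Lset l.
    by rewrite eqEcard S cardLset // card3.
  by rewrite (eqP E).
Qed.

Lemma ml_meet (S T : {set 'I_9}) (x : 'I_9) : x \in T -> x \in S -> make_loops M_P S T.
Proof.
move=> xT xS; rewrite /make_loops; apply/orP; left.
by apply/set0Pn; exists x; rewrite inE xT xS.
Qed.

Lemma ml_disj (S T : {set 'I_9}) : [disjoint T & S] ->
  make_loops M_P S T = (3 < #|T|)%N || [exists L in pappus_lines, L \subset T].
Proof.
move=> D; rewrite /make_loops /M_P (disjoint_setI0 D) eqxx /=.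
by rewrite (setDidPl D).
Qed.

Lemma nodisj (S T : {set 'I_9}) : ~~ [disjoint T & S] -> exists2 x, x \in T & x \in S.
Proof.
rewrite -setI_eq0 => /set0Pn [x]; rewrite inE => /andP [] ; by exists x.
Qed.

Lemma line_sub_card L (T : {set 'I_9}) : L \in pappus_lines -> L \subset T -> (3 <= #|T|)%N.
Proof.
move=> /pappus_linesP [l Hl ->] /subset_leq_card; by rewrite cardLset.
Qed.

Lemma card3P (T : {set 'I_9}) : #|T| = 3 ->
  exists x y z, [/\ x != y, y != z, x != z & T = [set x; y; z]].
Proof.
move=> HT; have := enum_uniq (mem T); have := cardE T; rewrite HT.
case E: (enum T) => [|x [|y [|z [|]]]] //= _.
rewrite !inE negb_or => /andP [/andP [xy xz] /andP [yz _]].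
exists x, y, z; split => //; apply/setP => w.
by rewrite -mem_enum E !inE orbA.
Qed.

Section LinDep.
Variable R : realType.
Local Notation C := (complex R).
Implicit Types (g : 'M[C]_(9,3)) (T U : {set 'I_9}).

Lemma lin_dep0 g T x : x \in T -> row x g = 0 -> lin_dep g T.
Proof.
move=> xT gx; apply/negP => /free_not0 H.
have m : (0 : 'rV[C]_3) \in rows_of g T by rewrite -gx; apply: map_f; rewrite mem_enum.
by move: (H _ m); rewrite eqxx.
Qed.

Lemma lin_dep_big g T : (3 < #|T|)%N -> lin_dep g T.
Proof.
move=> HT; apply/negP => /free_size3; rewrite size_map -cardE.
by rewrite leqNgt HT.
Qed.

Lemma lin_dep_sub g T U : T \subset U -> ~~ lin_dep g U -> ~~ lin_dep g T.
Proof.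
move=> TU; rewrite /lin_dep !negbK => HU.
have P : perm_eq (enum U) (enum T ++ enum (U :\: T)).
  apply: uniq_perm; first exact: enum_uniq.
    rewrite cat_uniq !enum_uniq /= andbT; apply/hasPn => x.
    by rewrite mem_enum inE => /andP [xnT _]; rewrite mem_enum.
  move=> x; rewrite mem_cat !mem_enum inE.
  by case xT: (x \in T); rewrite /= ?andbT //; apply: (subsetP TU).
move: HU; rewrite /rows_of (perm_free (perm_map _ P)) map_cat.
exact: catl_free.
Qed.

Lemma enum3 (x y z : 'I_9) : x != y -> y != z -> x != z ->
  perm_eq (enum [set x; y; z]) [:: x; y; z].
Proof.
move=> xy yz xz; apply: uniq_perm; first exact: enum_uniq.
  by rewrite /= !inE negb_or xy xz yz.
by move=> w; rewrite mem_enum !inE orbA.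
Qed.

Definition det3g g (x y z : 'I_9) := \det (mx3 (row x g) (row y g) (row z g)).

Lemma lin_dep3 g x y z : x != y -> y != z -> x != z ->
  lin_dep g [set x; y; z] = (det3g g x y z == 0).
Proof.
move=> xy yz xz; rewrite /lin_dep /rows_of (perm_free (perm_map _ (enum3 xy yz xz))) /=.
by rewrite free3 negbK.
Qed.

Lemma lin_dep1 g x : lin_dep g [set x] = (row x g == 0).
Proof. by rewrite /lin_dep /rows_of enum_set1 /= seq1_free negbK. Qed.

Lemma dep_half (S : {set 'I_9}) g :
  (forall x, x \in S -> row x g = 0) ->
  (forall x y z, x != y -> y != z -> x != z -> x \notin S -> y \notin S -> z \notin S ->
     lineb x y z -> lin_dep g [set x; y; z]) ->
  forall T, make_loops M_P S T -> lin_dep g T.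
Proof.
move=> R1 Rd T.
case: (boolP [disjoint T & S]) => D; last first.
  by case/nodisj: D => x xT xS _; apply: (lin_dep0 xT); apply: R1.
rewrite ml_disj // => /orP [big|/exists_inP [L HL LT]]; first exact: lin_dep_big.
case: (ltnP 3 #|T|) => [big|small]; first exact: lin_dep_big.
have /card3P [x [y [z [xy yz xz ET]]]] : #|T| = 3.
  by apply/eqP; rewrite eqn_leq small (line_sub_card HL LT).
have nS : forall w, w \in T -> w \notin S.
  by move=> w wT; apply/negP => wS; move/pred0P: D => /(_ w) /=; rewrite wT wS.
rewrite ET in LT nS *; apply: Rd => //; try (apply: nS; rewrite !inE eqxx ?orbT //).
by rewrite -LB //; apply/exists_inP; exists L.
Qed.

Lemma realize (S : {set 'I_9}) g :
  (forall x, x \in S -> row x g = 0) ->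
  (forall x y z, x != y -> y != z -> x != z -> x \notin S -> y \notin S -> z \notin S ->
     lineb x y z -> lin_dep g [set x; y; z]) ->
  (forall x y z, x != y -> y != z -> x != z -> x \notin S -> y \notin S -> z \notin S ->
     ~~ lineb x y z -> ~~ lin_dep g [set x; y; z]) ->
  (forall x y, x != y -> x \notin S -> y \notin S ->
     exists z, [/\ z \notin S, x != z, y != z & ~~ lineb x y z]) ->
  (forall x, x \notin S -> exists y, y \notin S /\ x != y) ->
  (exists x, x \notin S) ->
  realization (make_loops M_P S) g.
Proof.
move=> R1 Rd Ri E2 E1 E0 T; apply/idP/idP; last exact: dep_half.
apply: contraLR => NK.
case: (boolP [disjoint T & S]) => D; last first.
  by case/nodisj: D => x xT xS; move: NK; rewrite (ml_meet xT xS).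
move: NK; rewrite ml_disj // negb_or => /andP [small noline].
have fin2 : forall x y, x != y -> x \notin S -> y \notin S -> T \subset [set x; y] ->
    ~~ lin_dep g T.
  move=> x y xy xS yS sub; have [z [zS xz yz nl]] := E2 x y xy xS yS.
  apply: (lin_dep_sub _ (Ri x y z xy yz xz xS yS zS nl)).
  apply: (subset_trans sub); apply/subsetP => w; rewrite !inE => /orP [] ->; by rewrite ?orbT.
case: (ltnP 2 #|T|) => [c3|c2].
  have /card3P [x [y [z [xy yz xz ET]]]] : #|T| = 3.
    by apply/eqP; rewrite eqn_leq c3 andbT leqNgt.
  have nS : forall w, w \in T -> w \notin S.
    by move=> w wT; apply/negP => wS; move/pred0P: D => /(_ w) /=; rewrite wT wS.
  rewrite ET in noline nS *; apply: Ri => //; try (apply: nS; rewrite !inE eqxx ?orbT //).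
  by rewrite -LB.
have nS : forall w, w \in T -> w \notin S.
  by move=> w wT; apply/negP => wS; move/pred0P: D => /(_ w) /=; rewrite wT wS.
move: c2; rewrite leq_eqVlt => /orP [/eqP/eqP/cards2P [x [y [xy ET]]]|].
  by apply: (fin2 x y xy); rewrite ?ET; try (apply: nS; rewrite ET !inE eqxx ?orbT //).
rewrite ltnS leq_eqVlt => /orP [/eqP/eqP/cards1P [x ET]|].
  have xS : x \notin S by apply: nS; rewrite ET inE.
  have [y [yS xy]] := E1 x xS.
  by apply: (fin2 x y xy) => //; rewrite ET; apply/subsetP => w; rewrite !inE => ->.
rewrite ltnS leqn0 => /eqP/cards0_eq ET.
have [x xS] := E0; have [y [yS xy]] := E1 x xS.
by apply: (fin2 x y xy) => //; rewrite ET sub0set.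
Qed.

End LinDep.


Section Curve.
Variable R : realType.
Local Notation C := (complex R).

Definition polyfun (f : C -> C) := exists P : {poly C}, forall t, f t = P.[t].

Lemma pf_ext f g : (forall t, f t = g t) -> polyfun g -> polyfun f.
Proof. by move=> E [P HP]; exists P => t; rewrite E. Qed.

Lemma pf_const c : polyfun (fun _ => c).
Proof. by exists c%:P => t; rewrite hornerC. Qed.

Lemma pf_id : polyfun (fun t => t).
Proof. by exists 'X => t; rewrite hornerX. Qed.

Lemma pf_add f g : polyfun f -> polyfun g -> polyfun (fun t => f t + g t).
Proof. by move=> [P HP] [Q HQ]; exists (P + Q) => t; rewrite hornerD HP HQ. Qed.

Lemma pf_mul f g : polyfun f -> polyfun g -> polyfun (fun t => f t * g t).
Proof. by move=> [P HP] [Q HQ]; exists (P * Q) => t; rewrite hornerM HP HQ. Qed.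

Lemma pf_opp f : polyfun f -> polyfun (fun t => - f t).
Proof. by move=> [P HP]; exists (- P) => t; rewrite hornerN HP. Qed.

Lemma pf_sub f g : polyfun f -> polyfun g -> polyfun (fun t => f t - g t).
Proof. by move=> pf pg; apply: pf_add => //; apply: pf_opp. Qed.

Lemma pf_exp f n : polyfun f -> polyfun (fun t => f t ^+ n).
Proof.
move=> pf; elim: n => [|n IH]; first by exists 1 => t; rewrite expr0 hornerC.
by apply: (pf_ext (g := fun t => f t * f t ^+ n)) => [t|]; rewrite ?exprS //; apply: pf_mul.
Qed.

Lemma pf_sum (I : Type) (r : seq I) (P : pred I) (F : I -> C -> C) :
  (forall i, polyfun (F i)) -> polyfun (fun t => \sum_(i <- r | P i) F i t).
Proof.
move=> HF; elim: r => [|a r IH]; first by exists 0 => t; rewrite big_nil horner0.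
apply: (pf_ext (g := fun t => if P a then F a t + \sum_(i <- r | P i) F i t
                               else \sum_(i <- r | P i) F i t)).
  by move=> t; rewrite big_cons.
case: (P a) => //; exact: pf_add.
Qed.

Lemma pf_prod (I : Type) (r : seq I) (P : pred I) (F : I -> C -> C) :
  (forall i, polyfun (F i)) -> polyfun (fun t => \prod_(i <- r | P i) F i t).
Proof.
move=> HF; elim: r => [|a r IH]; first by exists 1 => t; rewrite big_nil hornerC.
apply: (pf_ext (g := fun t => if P a then F a t * \prod_(i <- r | P i) F i t
                               else \prod_(i <- r | P i) F i t)).
  by move=> t; rewrite big_cons.
case: (P a) => //; exact: pf_mul.
Qed.

Lemma pf_meval n (p : {mpoly C[n]}) (v : C -> 'I_n -> C) :
  (forall i, polyfun (fun t => v t i)) -> polyfun (fun t => p.@[v t]).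
Proof.
move=> Hv; apply: (pf_ext (fun t => mevalE (v t) p)).
apply: pf_sum => m; apply: pf_mul; first exact: pf_const.
by apply: pf_prod => i; apply: pf_exp.
Qed.

Lemma poly_all0 (P : {poly C}) : (forall t, P.[t] = 0) -> P = 0.
Proof.
move=> H; apply: (@roots_geq_poly_eq0 _ P [seq i%:R | i <- iota 0 (size P)]).
- by apply/allP => x /mapP [i _ ->]; rewrite /root H.
- rewrite map_inj_uniq ?iota_uniq // => a b /eqP; rewrite eqr_nat => /eqP //.
- by rewrite size_map size_iota.
Qed.

Lemma curve (K : matroid9) (g : 'M[C]_(9,3)) (h : C -> 'M[C]_(9,3)) (Q : {poly C}) :
  Q != 0 -> (forall x c, polyfun (fun t => h t x c)) -> h 0 = g ->
  (forall t, Q.[t] != 0 -> realization K (h t)) -> V_K K g.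
Proof.
move=> Q0 Hh h0 Hr p Hp.
have [P HP] : polyfun (fun t => p.@[coords (h t)]).
  apply: pf_meval => k; rewrite /coords; case/mxvec_indexP: k => x c.
  by apply: (pf_ext (fun t => mxvecE (h t) x c)).
have PQ : P * Q = 0.
  apply: poly_all0 => t; rewrite hornerM.
  case: (eqVneq Q.[t] 0) => [->|Qt]; first by rewrite mulr0.
  by rewrite -HP Hp ?mul0r //; apply: Hr.
have P0 : P = 0 by move/eqP: PQ; rewrite mulf_eq0 (negbTE Q0) orbF => /eqP.
by rewrite -h0 HP P0 horner0.
Qed.

End Curve.


Definition casesN : seq (seq nat) := [:: [:: 0; 3; 8; 6; 7; 1; 5; 2; 4]; [:: 0; 8; 3; 1; 6; 2; 7; 4; 5]; [:: 3; 0; 8; 6; 7; 1; 5; 2; 4]; [:: 3; 8; 0; 1; 2; 5; 7; 4; 6]; [:: 8; 0; 3; 1; 6; 2; 7; 4; 5]; [:: 8; 3; 0; 1; 2; 5; 7; 4; 6]; [:: 1; 4; 7; 0; 5; 6; 8; 2; 3]; [:: 1; 7; 4; 2; 8; 0; 6; 3; 5]; [:: 4; 1; 7; 0; 5; 6; 8; 2; 3]; [:: 4; 7; 1; 0; 2; 5; 8; 3; 6]; [:: 7; 1; 4; 2; 8; 0; 6; 3; 5]; [:: 7; 4; 1; 0; 2; 5; 8; 3; 6]; [:: 2; 5; 6; 7; 8; 1; 3; 0; 4]; [:: 2; 6; 5; 0; 7; 1; 8; 3; 4]; [:: 5; 2; 6; 7; 8; 1; 3; 0; 4]; [:: 5;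 6; 2; 0; 1; 4; 8; 3; 7]; [:: 6; 2; 5; 0; 7; 1; 8; 3; 4]; [:: 6; 5; 2; 0; 1; 4; 8; 3; 7]].
Definition lineR (r1 r2 r3 : nat) := has (fun l => all (fun r => (r == 2) || (r == 3 + 2 * l) || (r == 4 + 2 * l)) [:: r1;r2;r3]) [:: 0;1;2].
Definition all3 (rs : seq nat) (P : nat -> nat -> nat -> bool) :=
  all (fun r1 => all (fun r2 => all (fun r3 => P r1 r2 r3) rs) rs) rs.
Definition dist3 (r1 r2 r3 : nat) := [&& r1 != r2, r2 != r3 & r1 != r3].
Definition checkF (s : seq nat) := all3 (iota 2 7) (fun r1 r2 r3 => dist3 r1 r2 r3 ==> (lineN (nth 0%N s r1) (nth 0%N s r2) (nth 0%N s r3) == lineR r1 r2 r3)).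
Definition validS s := perm_eq s (iota 0 9) && checkF s.
Lemma allvalid : all validS casesN. Proof. by vm_compute. Qed.

Lemma all3P rs P r1 r2 r3 : all3 rs P -> r1 \in rs -> r2 \in rs -> r3 \in rs -> P r1 r2 r3.
Proof.
by move=> /allP H h1 h2 h3; move/allP: (H _ h1) => /(_ _ h2) /allP /(_ _ h3).
Qed.

Lemma lineR_2 : all3 (iota 2 7) (fun r1 r2 r3 => dist3 r1 r2 r3 ==> lineR r1 r2 r3 ==>
  [|| r1 == 2, r2 == 2 | r3 == 2]).
Proof. by vm_compute. Qed.
Lemma lineR_3 : all3 (iota 3 6) (fun r1 r2 r3 => dist3 r1 r2 r3 ==> ~~ lineR r1 r2 r3).
Proof. by vm_compute. Qed.
Lemma extF : all (fun r1 => all (fun r2 => (r1 != r2) ==>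
  has (fun r3 => [&& r1 != r3, r2 != r3 & ~~ lineR r1 r2 r3]) (iota 2 7)) (iota 2 7)) (iota 2 7).
Proof. by vm_compute. Qed.
Lemma extF' : all (fun r1 => all (fun r2 => (r1 != r2) ==>
  has (fun r3 => [&& r1 != r3, r2 != r3 & ~~ lineR r1 r2 r3]) (iota 3 6)) (iota 3 6)) (iota 3 6).
Proof. by vm_compute. Qed.

Section Roles.
Variable s : seq nat.
Hypothesis Hs : validS s.

Definition point r : 'I_9 := inord (nth 0%N s r).
Definition role (x : 'I_9) := index (val x) s.

Lemma Hperm : perm_eq s (iota 0 9). Proof. by case/andP: Hs. Qed.
Lemma HcheckF : checkF s. Proof. by case/andP: Hs. Qed.
Lemma s_uniq : uniq s. Proof. by rewrite (perm_uniq Hperm) iota_uniq. Qed.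
Lemma s_size : size s = 9. Proof. by rewrite (perm_size Hperm) size_iota. Qed.
Lemma mem_s n : (n \in s) = (n < 9)%N. Proof. by rewrite (perm_mem Hperm) mem_iota. Qed.

Lemma role_lt x : (role x < 9)%N.
Proof. have E := s_size; rewrite /role -[X in (_ < X)%N]E index_mem mem_s; exact: ltn_ord. Qed.

Lemma nth_lt r : (r < 9)%N -> (nth 0%N s r < 9)%N.
Proof. by move=> H; rewrite -mem_s mem_nth // s_size. Qed.


Lemma val_point r : (r < 9)%N -> val (point r) = nth 0%N s r.
Proof. by move=> H; apply: inordK; exact: nth_lt. Qed.

Lemma pointK x : point (role x) = x.
Proof. apply/val_inj; rewrite /= val_point ?role_lt // /role nth_index // mem_s; exact: ltn_ord. Qed.

Lemma roleK r : (r < 9)%N -> role (point r) = r.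
Proof. by move=> H; rewrite /role val_point // index_uniq ?s_uniq ?s_size. Qed.

Lemma eq_point x r : (r < 9)%N -> (x == point r) = (role x == r).
Proof.
move=> H; apply/eqP/eqP => [->|<-]; [exact: roleK | by rewrite pointK].
Qed.

Lemma role_inj x y : (x != y) = (role x != role y).
Proof.
apply/negbLR; rewrite negbK; apply/eqP/eqP => [->//|E].
by rewrite -(pointK x) -(pointK y) E.
Qed.

Lemma val_role x : val x = nth 0%N s (role x).
Proof. by rewrite /role nth_index // mem_s ltn_ord. Qed.

Lemma lineb_role x y z : (2 <= role x)%N -> (2 <= role y)%N -> (2 <= role z)%N ->
  x != y -> y != z -> x != z -> lineb x y z = lineR (role x) (role y) (role z).
Proof.
move=> hx hy hz; rewrite !role_inj => xy yz xz.
have := all3P HcheckF (r1 := role x) (r2 := role y) (r3 := role z).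
rewrite !mem_iota /= !role_lt hx hy hz /dist3 xy yz xz /= => /(_ isT isT isT) /eqP <-.
by rewrite /lineb -!val_role.
Qed.

Definition Sij : {set 'I_9} := [set point 0; point 1].
Definition Sijk : {set 'I_9} := [set point 0; point 1; point 2].

Lemma notin_Sij x : (x \notin Sij) = (2 <= role x)%N.
Proof. by rewrite !inE !eq_point //; case: (role x) => [|[|]]. Qed.

Lemma notin_Sijk x : (x \notin Sijk) = (3 <= role x)%N.
Proof. by rewrite !inE !eq_point //; case: (role x) => [|[|[|]]]. Qed.

End Roles.


Section Gen.
Variable R : realType.
Local Notation C := (complex R).

Definition Pdet (x y z : 'I_9) : {mpoly C[9 * 3]} :=
  \det (\matrix_(r < 3, c < 3) 'X_(mxvec_index (nth x [:: x; y; z] r) c)).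

Lemma Pdet_eval (g : 'M[C]_(9,3)) x y z : (Pdet x y z).@[coords g] = det3g g x y z.
Proof.
rewrite /Pdet -det_map_mx /det3g; congr (\det _); apply/matrixP => r c.
rewrite !mxE; apply: (etrans (mevalXU _ _)); rewrite /coords mxvecE.
by case: r => [[|[|[|]]] ?] //=; rewrite mxE.
Qed.

Lemma PX_eval (g : 'M[C]_(9,3)) x c : ('X_(mxvec_index x c) : {mpoly C[9 * 3]}).@[coords g] = g x c.
Proof. by rewrite mevalXU /coords mxvecE. Qed.

Lemma pf_coords (h : C -> 'M[C]_(9,3)) : (forall x c, polyfun (fun t => h t x c)) ->
  forall k, polyfun (fun t => coords (h t) k).
Proof.
move=> Hh k; rewrite /coords; case/mxvec_indexP: k => x c.
by apply: (pf_ext (fun t => mxvecE (h t) x c)).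
Qed.

Lemma pf_det (h : C -> 'M[C]_(9,3)) x y z : (forall x c, polyfun (fun t => h t x c)) ->
  polyfun (fun t => det3g (h t) x y z).
Proof.
move=> Hh; apply: (pf_ext (fun t => esym (Pdet_eval (h t) x y z))).
by apply: pf_meval; apply: pf_coords.
Qed.

Definition pfr (f : C -> 'rV[C]_3) := forall c, polyfun (fun t => f t 0 c).

Lemma pfr_add f g : pfr f -> pfr g -> pfr (fun t => f t + g t).
Proof. by move=> pf pg c; apply: (pf_ext (g := fun t => f t 0 c + g t 0 c)) => [t|]; rewrite ?mxE //; apply: pf_add. Qed.

Lemma pfr_scale a f : polyfun a -> pfr f -> pfr (fun t => a t *: f t).
Proof. by move=> pa pf c; apply: (pf_ext (g := fun t => a t * f t 0 c)) => [t|]; rewrite ?mxE //; apply: pf_mul. Qed.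

Lemma pfr_const v : pfr (fun _ => v).
Proof. by move=> c; apply: pf_const. Qed.

Lemma pf_lin (a b : C) : polyfun (fun t : C => (1 - t) * a + t * b).
Proof.
apply: pf_add; apply: pf_mul; try apply: pf_const; try apply: pf_id.
by apply: pf_sub; [apply: pf_const|apply: pf_id].
Qed.

Definition vz (l : seq int) : 'rV[C]_3 := \row_(c < 3) (nth 0 l c)%:~R.

Definition det3z (a b c : seq int) : int :=
  let A r k := nth 0 (nth [::] [:: a; b; c] r) k in
  A 0%N 0%N * (A 1%N 1%N * A 2%N 2%N - A 1%N 2%N * A 2%N 1%N)
  - A 0%N 1%N * (A 1%N 0%N * A 2%N 2%N - A 1%N 2%N * A 2%N 0%N)
  + A 0%N 2%N * (A 1%N 0%N * A 2%N 1%N - A 1%N 1%N * A 2%N 0%N).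

Lemma det_vz a b c : \det (mx3 (vz a) (vz b) (vz c)) = (det3z a b c)%:~R.
Proof.
rewrite det3E /det3z !mxE /=.
rewrite (_ : (1 %% 3 = 1)%N) // (_ : ((1 %% 3 + 1 %% 3) %% 3 = 2)%N) //.
rewrite !(intrD, intrB, intrM, intrN); ring.
Qed.

End Gen.

Section Curve2.
Variable R : realType.
Local Notation C := (complex R).
Variable s : seq nat.
Hypothesis Hs : validS s.
Local Notation point := (point s).
Local Notation role := (role s).

Lemma curve2 (S : {set 'I_9}) (good : seq (nat * nat * nat)) (h : C -> 'M[C]_(9,3)) g :
  (forall x c, polyfun (fun t => h t x c)) -> h 0 = g ->
  (forall t x, x \in S -> row x (h t) = 0) ->
  (forall t x y z, x != y -> y != z -> x != z -> x \notin S -> y \notin S -> z \notin S ->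
     lineb x y z -> lin_dep (h t) [set x; y; z]) ->
  (forall x y z, x != y -> y != z -> x != z -> x \notin S -> y \notin S -> z \notin S ->
     ~~ lineb x y z -> (role x, role y, role z) \in good) ->
  all (fun p => det3g (h 1) (point p.1.1) (point p.1.2) (point p.2) != 0) good ->
  (forall x y, x != y -> x \notin S -> y \notin S ->
     exists z, [/\ z \notin S, x != z, y != z & ~~ lineb x y z]) ->
  (forall x, x \notin S -> exists y, y \notin S /\ x != y) ->
  (exists x, x \notin S) ->
  V_K (make_loops M_P S) g.
Proof.
move=> Hh h0 R1 Rd Rg D1 E2 E1 E0.
have [Q HQ] : polyfun (fun t => \prod_(p <- good) det3g (h t) (point p.1.1) (point p.1.2) (point p.2)).
  by apply: pf_prod => p; apply: pf_det.
have Q0 : Q != 0.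
  have D1' : \prod_(p <- good) det3g (h 1) (point p.1.1) (point p.1.2) (point p.2) != 0.
    by rewrite prodf_seq_neq0; apply/allP => p pg; rewrite /= (allP D1 p pg).
  by apply/negP => /eqP Q0; move: D1'; rewrite HQ Q0 horner0 eqxx.
apply: (curve Q0 Hh h0) => t Qt.
move: Qt; rewrite -HQ prodf_seq_neq0 => /allP Ht.
apply: realize => //; first exact: R1.
  by move=> x y z xy yz xz xS yS zS; apply: Rd.
move=> x y z xy yz xz xS yS zS nl.
have := Ht _ (Rg x y z xy yz xz xS yS zS nl); rewrite /= !(pointK Hs).
by rewrite lin_dep3.
Qed.

End Curve2.

Lemma disj3 (S : {set 'I_9}) x y z : x \notin S -> y \notin S -> z \notin S ->
  [disjoint [set x; y; z] & S].
Proof.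
move=> xS yS zS; apply/pred0P => w /=; rewrite !inE.
by apply/negP => /andP [/orP [/orP []|] /eqP -> wS]; [move: xS|move: yS|move: zS]; rewrite wS.
Qed.

Lemma ml3 (S : {set 'I_9}) x y z : x != y -> y != z -> x != z ->
  x \notin S -> y \notin S -> z \notin S -> make_loops M_P S [set x; y; z] = lineb x y z.
Proof.
move=> xy yz xz xS yS zS; rewrite ml_disj ?disj3 // card3 // LB //.
Qed.

Section Dirs.
Variable R : realType.
Local Notation C := (complex R).

Lemma VK_rows (S : {set 'I_9}) (g : 'M[C]_(9,3)) : V_K (make_loops M_P S) g ->
  forall x, x \in S -> row x g = 0.
Proof.
move=> VK x xS; apply/rowP => c; rewrite !mxE.
have := VK ('X_(mxvec_index x c)); rewrite PX_eval; apply => h Hh; rewrite PX_eval.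
have : lin_dep h [set x] by rewrite Hh; apply: (ml_meet (x := x)); rewrite ?inE.
by rewrite lin_dep1 => /eqP/rowP/(_ c); rewrite !mxE.
Qed.

Lemma VK_lines (S : {set 'I_9}) (g : 'M[C]_(9,3)) : V_K (make_loops M_P S) g ->
  forall x y z, x != y -> y != z -> x != z -> x \notin S -> y \notin S -> z \notin S ->
     lineb x y z -> lin_dep g [set x; y; z].
Proof.
move=> VK x y z xy yz xz xS yS zS l; rewrite lin_dep3 //; apply/eqP.
have := VK (@Pdet R x y z); rewrite Pdet_eval; apply => h Hh; rewrite Pdet_eval.
by apply/eqP; rewrite -lin_dep3 // Hh ml3.
Qed.

Lemma VK_VCK (S : {set 'I_9}) (g : 'M[C]_(9,3)) :
  V_K (make_loops M_P S) g -> V_CK (make_loops M_P S) g.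
Proof.
move=> VK T; apply: dep_half; [exact: VK_rows | exact: VK_lines].
Qed.

End Dirs.

Section RoleDirs.
Variable s : seq nat.
Hypothesis Hs : validS s.
Local Notation point := (point s).
Local Notation role := (role s).
Local Notation Sij := (Sij s).
Local Notation Sijk := (Sijk s).

Lemma mem_iota_role (m : nat) x : (m <= 9)%N -> (role x \in iota m (9 - m)) = (m <= role x)%N.
Proof. by move=> Hm; rewrite mem_iota subnKC // (role_lt Hs) andbT. Qed.

Section Ext.
Variable S : {set 'I_9}.
Variable m : nat.
Hypothesis Hm2 : (2 <= m)%N.
Hypothesis Hm3 : (m <= 3)%N.
Hypothesis HS : forall x, (x \notin S) = (m <= role x)%N.
Hypothesis HE : all (fun r1 => all (fun r2 => (r1 != r2) ==>
  has (fun r3 => [&& r1 != r3, r2 != r3 & ~~ lineR r1 r2 r3]) (iota m (9 - m))) (iota m (9 - m))) (iota m (9 - m)).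

Lemma ext2 x y : x != y -> x \notin S -> y \notin S ->
     exists z, [/\ z \notin S, x != z, y != z & ~~ lineb x y z].
Proof.
have m9 : (m <= 9)%N by apply: leq_trans Hm3 _.
move=> xy; rewrite !HS => xS yS.
have hx : role x \in iota m (9 - m) by rewrite mem_iota_role.
have hy : role y \in iota m (9 - m) by rewrite mem_iota_role.
have := allP (allP HE _ hx) _ hy; rewrite -(role_inj Hs) xy /= => /hasP [r3 hr3 /and3P [n1 n2 n3]].
have r39 : (r3 < 9)%N by move: hr3; rewrite mem_iota subnKC // => /andP [].
have mr3 : (m <= r3)%N by move: hr3; rewrite mem_iota => /andP [].
exists (point r3); rewrite HS (roleK Hs) // !(role_inj Hs) (roleK Hs) // n1 n2 mr3.
rewrite (lineb_role Hs) ?(roleK Hs) // ?(role_inj Hs) ?(roleK Hs) //;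
  try (by apply: leq_trans Hm2 _).
Qed.

Lemma ext1 x : x \notin S -> exists y, y \notin S /\ x != y.
Proof.
have m9 : (m.+1 < 9)%N by apply: leq_trans Hm3 _.
move=> xS; case E: (role x == m).
  exists (point m.+1); rewrite HS (roleK Hs) // leqnSn (role_inj Hs) (roleK Hs) // (eqP E).
  by rewrite neq_ltn ltnSn.
exists (point m); rewrite HS (roleK Hs) ?leqnn ?(role_inj Hs) ?(roleK Hs) ?E //.
all: try exact: ltnW.
Qed.

Lemma ext0 : exists x, x \notin S.
Proof.
exists (point m); rewrite HS (roleK Hs) //; apply: leq_ltn_trans Hm3 _; done.
Qed.

End Ext.

Lemma notin_Sij' x : (x \notin Sij) = (2 <= role x)%N.
Proof. exact: (notin_Sij Hs). Qed.
Lemma notin_Sijk' x : (x \notin Sijk) = (3 <= role x)%N.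
Proof. exact: (notin_Sijk Hs). Qed.

Lemma lineR_has2 x y z : x != y -> y != z -> x != z ->
  x \notin Sij -> y \notin Sij -> z \notin Sij -> lineb x y z ->
  [|| x == point 2, y == point 2 | z == point 2].
Proof.
move=> xy yz xz; rewrite !notin_Sij' => hx hy hz.
rewrite (lineb_role Hs) // => l.
have := all3P lineR_2 (r1 := role x) (r2 := role y) (r3 := role z).
rewrite !mem_iota_role // hx hy hz /dist3 -!(role_inj Hs) xy yz xz l /=.
by rewrite !(eq_point Hs) //; apply.
Qed.

Lemma VKp_VCK (R : realType) (g : 'M[complex R]_(9,3)) :
  V_K (make_loops M_P Sijk) g -> V_CK (make_loops M_P Sij) g.
Proof.
move=> VK T; apply: dep_half.
  by move=> x xS; apply: (VK_rows VK); move: xS; rewrite !inE => ->.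
move=> x y z xy yz xz xS yS zS l.
have k0 : row (point 2) g = 0 by apply: (VK_rows VK); rewrite !inE eqxx ?orbT.
case/or3P: (lineR_has2 xy yz xz xS yS zS l) => /eqP E; apply: (lin_dep0 (x := point 2)) => //;
  by rewrite -E !inE eqxx ?orbT.
Qed.

Definition zr (r : nat) : seq int :=
  match r with
  | 2 => [:: 0%Z; 0%Z; 1%Z] | 3 => [:: 2%Z; 0%Z; (-1)%Z] | 4 => [:: 1%Z; 0%Z; 2%Z]
  | 5 => [:: 0%Z; 1%Z; 3%Z] | 6 => [:: 0%Z; 1%Z; (-2)%Z] | 7 => [:: 3%Z; 3%Z; 1%Z]
  | 8 => [:: 3%Z; 3%Z; (-3)%Z] | _ => [:: 0%Z; 0%Z; 0%Z] end.
Definition zrp (r : nat) : seq int := if (3 <= r)%N then zr r else [:: 0%Z; 0%Z; 0%Z].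
Definition trip (rs : seq nat) : seq (nat * nat * nat) :=
  [seq (p, r3) | p <- [seq (r1, r2) | r1 <- rs, r2 <- rs], r3 <- rs].
Definition goodP := [seq p <- trip (iota 3 6) | dist3 p.1.1 p.1.2 p.2].
Lemma checkP : all (fun p => [&& (p.1.1 < 9)%N, (p.1.2 < 9)%N, (p.2 < 9)%N &
   det3z (zrp p.1.1) (zrp p.1.2) (zrp p.2) != 0]) goodP.
Proof. by vm_compute. Qed.

Lemma mem_trip rs a b c : a \in rs -> b \in rs -> c \in rs -> (a, b, c) \in trip rs.
Proof.
move=> ha hb hc; rewrite /trip.
by apply: (allpairs_f (fun p r3 => (p, r3))) => //; apply: (allpairs_f (fun r1 r2 => (r1, r2))).
Qed.

Lemma vz0 (R : realType) c : (vz R [:: 0%Z; 0%Z; 0%Z]) 0 c = 0.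
Proof. by rewrite mxE; case: c => [[|[|[|]]] ?]. Qed.

Definition hP (R : realType) (g : 'M[complex R]_(9,3)) (t : complex R) : 'M[complex R]_(9,3) :=
  \matrix_(x, c) ((1 - t) * g x c + t * vz R (zrp (role x)) 0 c).

Lemma VKp_curve (R : realType) (g : 'M[complex R]_(9,3)) :
  (forall x, x \in Sijk -> row x g = 0) -> V_K (make_loops M_P Sijk) g.
Proof.
move=> Hg.
apply: (curve2 Hs (good := goodP) (h := hP g)).
- move=> x c; apply: (pf_ext (g := fun t => (1 - t) * g x c + t * vz R (zrp (role x)) 0 c)).
    by move=> t; rewrite mxE.
  apply: pf_add; apply: pf_mul; try apply: pf_const; try apply: pf_id.
  by apply: pf_sub; [apply: pf_const|apply: pf_id].
- by apply/matrixP => x c; rewrite mxE subr0 mul1r mul0r addr0.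
- move=> t x xS; apply/rowP => c; rewrite !mxE.
  have -> : g x c = 0 by move/rowP: (Hg x xS) => /(_ c); rewrite !mxE.
  have -> : zrp (role x) = [:: 0%Z; 0%Z; 0%Z].
    by rewrite /zrp -notin_Sijk' xS.
  by move: (vz0 R c); rewrite mxE => ->; rewrite !mulr0 addr0.
- move=> t x y z xy yz xz; rewrite !notin_Sijk' => hx hy hz.
  rewrite (lineb_role Hs) ?(leq_trans _ hx) ?(leq_trans _ hy) ?(leq_trans _ hz) //.
  have := all3P lineR_3 (r1 := role x) (r2 := role y) (r3 := role z).
  by rewrite !mem_iota_role // hx hy hz /dist3 -!(role_inj Hs) xy yz xz /= => /(_ isT isT isT) /negbTE ->.
- move=> x y z xy yz xz; rewrite !notin_Sijk' => hx hy hz _.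
  rewrite mem_filter /dist3 /= -!(role_inj Hs) xy yz xz /=.
  by apply: mem_trip; rewrite (@mem_iota_role 3).
- apply/allP => p /(allP checkP) /and4P [h1 h2 h3 hd].
  have rowh1 : forall r, (r < 9)%N -> row (point r) (hP g 1) = vz R (zrp r).
    by move=> r hr; apply/rowP => c; rewrite !mxE (roleK Hs) // subrr mul0r add0r mul1r.
  by rewrite /det3g !rowh1 // det_vz intr_eq0.
- by move=> x y; apply: (ext2 (m := 3)) => //; try exact: notin_Sijk'; try exact: extF'.
- by move=> x; apply: (ext1 (m := 3)) => //; exact: notin_Sijk'.
- by apply: (ext0 (m := 3)) => //; exact: notin_Sijk'.
Qed.

Definition lamz (r : nat) : int :=
  match r with 3 => (-1)%Z | 4 => 2%Z | 5 => 3%Z | 6 => (-2)%Z | 7 => 1%Z | 8 => (-3)%Z | _ => 0%Z end.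
Definition muz (r : nat) : int :=
  match r with 3 => 2%Z | 4 => 1%Z | 5 => 1%Z | 6 => 1%Z | 7 => 3%Z | 8 => 3%Z | _ => 0%Z end.
Definition Kz : seq int := [:: 0%Z; 0%Z; 1%Z].
Definition Wz (l : nat) : seq int :=
  match l with 0 => [:: 1%Z; 0%Z; 0%Z] | 1 => [:: 0%Z; 1%Z; 0%Z] | _ => [:: 1%Z; 1%Z; 0%Z] end.
Definition lidx (r : nat) : nat := (r - 3)./2.
Definition comb (a b : int) (u v : seq int) : seq int :=
  [:: a * nth 0 u 0%N + b * nth 0 v 0%N; a * nth 0 u 1%N + b * nth 0 v 1%N;
      a * nth 0 u 2%N + b * nth 0 v 2%N].
Lemma comb_ok : all (fun r => comb (lamz r) (muz r) Kz (Wz (lidx r)) == zr r) (iota 3 6).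
Proof. by vm_compute. Qed.

Lemma comb_vz (R : realType) a b u v :
  a%:~R *: vz R u + b%:~R *: vz R v = vz R (comb a b u v).
Proof. by apply/rowP => c; rewrite !mxE; case: c => [[|[|[|]]] ?] //=; rewrite intrD !intrM. Qed.

Definition goodF := [seq p <- trip (iota 2 7) | dist3 p.1.1 p.1.2 p.2 && ~~ lineR p.1.1 p.1.2 p.2].
Lemma checkF_det : all (fun p => [&& (2 <= p.1.1 < 9)%N, (2 <= p.1.2 < 9)%N, (2 <= p.2 < 9)%N &
   det3z (zr p.1.1) (zr p.1.2) (zr p.2) != 0]) goodF.
Proof. by vm_compute. Qed.

End RoleDirs.


Section RoleDirs2.
Variable s : seq nat.
Hypothesis Hs : validS s.
Local Notation point := (point s).
Local Notation role := (role s).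
Local Notation Sij := (Sij s).
Local Notation Sijk := (Sijk s).
Local Notation notin_Sij' := (notin_Sij' Hs).
Local Notation ext2 := (ext2 Hs).
Local Notation ext1 := (ext1 Hs).
Local Notation ext0 := (ext0 Hs).

Section FCurve.
Variable R : realType.
Local Notation C := (complex R).
Variable g : 'M[C]_(9,3).
Variables (lam mu : nat -> C) (w : nat -> 'rV[C]_3).
Hypothesis Hij : forall x, x \in Sij -> row x g = 0.
Hypothesis Hrep : forall r, (3 <= r < 9)%N ->
  row (point r) g = lam r *: row (point 2) g + mu r *: w (lidx r).

Definition Kt (t : C) : 'rV[C]_3 := (1 - t) *: row (point 2) g + t *: vz R Kz.
Definition Wt (l : nat) (t : C) : 'rV[C]_3 := (1 - t) *: w l + t *: vz R (Wz l).
Definition rowF (r : nat) (t : C) : 'rV[C]_3 :=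
  if r == 2 then Kt t
  else if (3 <= r < 9)%N then
    ((1 - t) * lam r + t * (lamz r)%:~R) *: Kt t + ((1 - t) * mu r + t * (muz r)%:~R) *: Wt (lidx r) t
  else 0.
Definition hF (t : C) : 'M[C]_(9,3) := \matrix_(x, c) rowF (role x) t 0 c.

Lemma row_hF t x : row x (hF t) = rowF (role x) t.
Proof. by apply/rowP => c; rewrite !mxE. Qed.

Lemma pfr_Kt : pfr Kt.
Proof.
apply: pfr_add; apply: pfr_scale; try apply: pfr_const; try apply: pf_id.
by apply: pf_sub; [apply: pf_const|apply: pf_id].
Qed.

Lemma pfr_Wt l : pfr (Wt l).
Proof.
apply: pfr_add; apply: pfr_scale; try apply: pfr_const; try apply: pf_id.
by apply: pf_sub; [apply: pf_const|apply: pf_id].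
Qed.

Lemma pfr_rowF r : pfr (rowF r).
Proof.
rewrite /rowF; case: (r == 2); first exact: pfr_Kt.
case: (3 <= r < 9)%N; last exact: pfr_const.
by apply: pfr_add; apply: pfr_scale; first [apply: pf_lin | apply: pfr_Kt | apply: pfr_Wt].
Qed.

Lemma rowF0 r : (r < 9)%N -> rowF r 0 = row (point r) g.
Proof.
move=> r9; rewrite /rowF /Kt /Wt !subr0 !scale1r !scale0r !addr0 !mul1r !mul0r !addr0.
case: eqP => [->//|r2].
case: ifP => [/Hrep -> //|hr]; symmetry; apply: Hij.
rewrite !inE !(eq_point Hs) // (roleK Hs) //; move: r2 hr r9.
by case: r => [|[|[|n]]] //= _ ->.
Qed.

Lemma rowF_span l r t : l \in [:: 0; 1; 2]%N -> (r == 2) || (r == 3 + 2 * l)%N || (r == 4 + 2 * l)%N ->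
  rowF r t \in <<[:: Kt t; Wt l t]>>%VS.
Proof.
move=> hl hr.
have HK : Kt t \in <<[:: Kt t; Wt l t]>>%VS by apply: memv_span; rewrite mem_head.
have Hc : forall a b, a *: Kt t + b *: Wt l t \in <<[:: Kt t; Wt l t]>>%VS.
  by move=> a b; apply: memvD; apply: memvZ; apply: memv_span;
    [rewrite mem_head | exact: (mem_last (Kt t) [:: Wt l t])].
have Hline : forall r, (3 <= r < 9)%N -> lidx r = l -> rowF r t \in <<[:: Kt t; Wt l t]>>%VS.
  move=> r0 h0 e0; rewrite /rowF ifF; last by apply/eqP => E; move: h0; rewrite E.
  by rewrite h0 e0; apply: Hc.
case/orP: hr => [/orP [] |] /eqP ->; first by rewrite /rowF eqxx.
  by apply: Hline; move: hl; rewrite !inE => /or3P [] /eqP ->.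
by apply: Hline; move: hl; rewrite !inE => /or3P [] /eqP ->.
Qed.

Lemma rowF1 r : (2 <= r < 9)%N -> rowF r 1 = vz R (zr r).
Proof.
move=> /andP [r2 r9]; rewrite /rowF /Kt /Wt !subrr !scale0r !add0r !scale1r !mul0r !add0r !mul1r.
case: eqP => [->//|nr2].
have r3 : (3 <= r < 9)%N by rewrite r9 andbT ltn_neqAle eq_sym; apply/andP; split => //; apply/eqP.
rewrite r3 comb_vz; congr (vz R _); apply/eqP.
by apply: (allP comb_ok); rewrite mem_iota; exact: r3.
Qed.

Lemma VK_curveF : V_K (make_loops M_P Sij) g.
Proof.
apply: (curve2 Hs (good := goodF) (h := hF)).
- move=> x c; apply: (pf_ext (g := fun t => rowF (role x) t 0 c)); first by move=> t; rewrite mxE.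
  exact: pfr_rowF.
- by apply/matrixP => x c; rewrite mxE rowF0 ?(role_lt Hs) // (pointK Hs) mxE.
- move=> t x; rewrite -[x \in Sij]negbK notin_Sij' -ltnNge => hx; rewrite row_hF /rowF.
  by move: hx; case: (role x) => [|[|]].
- move=> t x y z xy yz xz; rewrite !notin_Sij' => hx hy hz.
  rewrite (lineb_role Hs) // => /hasP [l hl /allP Hl].
  rewrite /lin_dep /rows_of (perm_free (perm_map _ (enum3 xy yz xz))) /= !row_hF.
  apply/negP => /span2_nfree H.
  suff : (3 <= 2)%N by [].
  apply: (H (Kt t) (Wt l t)) => v; rewrite !inE => /or3P [] /eqP ->; apply: rowF_span => //;
    by apply: Hl; rewrite !inE eqxx ?orbT.
- move=> x y z xy yz xz; rewrite !notin_Sij' => hx hy hz.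
  rewrite (lineb_role Hs) // => nl.
  rewrite mem_filter /dist3 /= -!(role_inj Hs) xy yz xz nl /=.
  by apply: mem_trip; rewrite (@mem_iota_role s Hs 2).
- apply/allP => p /(allP checkF_det) /and4P [h1 h2 h3 hd].
  rewrite /det3g !row_hF !(roleK Hs) ?(andP h1).2 ?(andP h2).2 ?(andP h3).2 //.
  by rewrite !rowF1 // det_vz intr_eq0.
- by move=> x y; apply: (ext2 (m := 2)) => //; try exact: notin_Sij'; try exact: extF.
- by move=> x; apply: (ext1 (m := 2)) => //; exact: notin_Sij'.
- by apply: (ext0 (m := 2)) => //; exact: notin_Sij'.
Qed.

End FCurve.

End RoleDirs2.


Definition tripcond (a b c : nat) :=
  [|| all (fun x => x \in [:: 0; 3; 8]%N) [:: a; b; c],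
      all (fun x => x \in [:: 1; 4; 7]%N) [:: a; b; c] |
      all (fun x => x \in [:: 2; 5; 6]%N) [:: a; b; c]].

Lemma find_all : all (fun a => all (fun b => all (fun c =>
  [&& a != b, c != a, c != b & tripcond a b c] ==>
  has (fun s => [&& nth 0%N s 0%N == a, nth 0%N s 1%N == b & nth 0%N s 2%N == c]) casesN)
  (iota 0 9)) (iota 0 9)) (iota 0 9).
Proof. by vm_compute. Qed.

Lemma find_s (i j k : 'I_9) : i != j -> k != i -> k != j ->
  [set i; j; k] \in pappus_triples ->
  exists2 s, validS s & [/\ point s 0 = i, point s 1 = j & point s 2 = k].
Proof.
move=> ij ki kj HT.
have HC : tripcond i j k.
  move: HT; rewrite /pappus_triples !inE => /orP [/orP [] |] /eqP E.
  - have hi : i \in [set pt 1; pt 4; pt 9] by rewrite -E !inE eqxx.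
    have hj : j \in [set pt 1; pt 4; pt 9] by rewrite -E !inE eqxx ?orbT.
    have hk : k \in [set pt 1; pt 4; pt 9] by rewrite -E !inE eqxx ?orbT.
    move: hi hj hk; rewrite !inE !eqpt // !eqSS -!orbA => hi hj hk.
    by rewrite /tripcond /= !inE hi hj hk ?orbT.
  - have hi : i \in [set pt 2; pt 5; pt 8] by rewrite -E !inE eqxx.
    have hj : j \in [set pt 2; pt 5; pt 8] by rewrite -E !inE eqxx ?orbT.
    have hk : k \in [set pt 2; pt 5; pt 8] by rewrite -E !inE eqxx ?orbT.
    move: hi hj hk; rewrite !inE !eqpt // !eqSS -!orbA => hi hj hk.
    by rewrite /tripcond /= !inE hi hj hk ?orbT.
  - have hi : i \in [set pt 3; pt 6; pt 7] by rewrite -E !inE eqxx.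
    have hj : j \in [set pt 3; pt 6; pt 7] by rewrite -E !inE eqxx ?orbT.
    have hk : k \in [set pt 3; pt 6; pt 7] by rewrite -E !inE eqxx ?orbT.
    move: hi hj hk; rewrite !inE !eqpt // !eqSS -!orbA => hi hj hk.
    by rewrite /tripcond /= !inE hi hj hk ?orbT.
have := find_all; move/allP/(_ (val i)); rewrite mem_iota ltn_ord => /(_ isT).
move/allP/(_ (val j)); rewrite mem_iota ltn_ord => /(_ isT).
move/allP/(_ (val k)); rewrite mem_iota ltn_ord => /(_ isT).
rewrite !val_eqE ij ki kj HC => /implyP /(_ isT) /hasP [s Hs /and3P [/eqP h0 /eqP h1 /eqP h2]].
have Vs : validS s by apply: (allP allvalid).
exists s => //; split; apply/val_inj; rewrite val_point //.
Qed.

Section Main.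
Variable R : realType.

Lemma line_rep s (Hs : validS s) (g : 'M[complex R]_(9,3)) :
  V_CK (make_loops M_P (Sij s)) g -> row (point s 2) g != 0 -> forall l, (l < 3)%N ->
  exists l1 m1 l2 m2 (w : 'rV[complex R]_3),
    row (point s (3 + 2 * l)) g = l1 *: row (point s 2) g + m1 *: w /\
    row (point s (4 + 2 * l)) g = l2 *: row (point s 2) g + m2 *: w.
Proof.
move=> VC k0 l hl.
have ha : (3 + 2 * l < 9)%N by lia.
have hb : (4 + 2 * l < 9)%N by lia.
have d1 : point s 2 != point s (3 + 2 * l) by rewrite (role_inj Hs) !(roleK Hs) //; apply/eqP; lia.
have d2 : point s (3 + 2 * l) != point s (4 + 2 * l).
  rewrite (role_inj Hs) !(roleK Hs) //; apply/eqP; lia.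
have d3 : point s 2 != point s (4 + 2 * l) by rewrite (role_inj Hs) !(roleK Hs) //; apply/eqP; lia.
have LD : lin_dep g [set point s 2; point s (3 + 2 * l); point s (4 + 2 * l)].
  apply: VC; rewrite ml3 // ?(notin_Sij Hs) ?(roleK Hs) //.
  rewrite (lineb_role Hs) ?(roleK Hs) //.
  by case: l hl {ha hb d1 d2 d3} => [|[|[|]]].
move: LD; rewrite /lin_dep /rows_of (perm_free (perm_map _ (enum3 d1 d2 d3))) /=.
exact: rep.
Qed.

End Main.

Theorem mainTheorem14 (R : realType) (i j k : 'I_9) :
  i != j ->
  ~~ [exists L in pappus_lines, (i \in L) && (j \in L)] ->
  k != i -> k != j -> [set i; j; k] \in pappus_triples ->
  forall g : 'M[complex R]_(9,3),
    V_CK (make_loops M_P [set i; j]) g <->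
    (V_K (make_loops M_P [set i; j]) g \/ V_K (make_loops M_P [set i; j; k]) g).
Proof.
move=> ij _ ki kj HT g.
have [s Hs [h0 h1 h2]] := find_s ij ki kj HT.
have ES : [set i; j] = Sij s by rewrite /Sij h0 h1.
have ESk : [set i; j; k] = Sijk s by rewrite /Sijk h0 h1 h2.
rewrite ESk ES; split; last first.
  by case => [VK | VK']; [exact: VK_VCK | exact: (VKp_VCK Hs)].
move=> VC.
have Hij : forall x, x \in Sij s -> row x g = 0.
  move=> x xS; apply/eqP; rewrite -lin_dep1; apply: VC.
  by apply: (ml_meet (x := x)) => //; rewrite inE.
case: (eqVneq (row (point s 2) g) 0) => k0.
  right; apply: (VKp_curve Hs) => x; rewrite /Sijk !inE => /orP [xS|/eqP ->] //.
  by apply: Hij; rewrite /Sij !inE.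
left.
have [a3 [m3 [a4 [m4 [w0 [e3 e4]]]]]] := line_rep Hs VC k0 (l := 0) isT.
have [a5 [m5 [a6 [m6 [w1 [e5 e6]]]]]] := line_rep Hs VC k0 (l := 1) isT.
have [a7 [m7 [a8 [m8 [w2 [e7 e8]]]]]] := line_rep Hs VC k0 (l := 2) isT.
apply: (VK_curveF Hs (lam := fun r => match r with 3 => a3 | 4 => a4 | 5 => a5 | 6 => a6 | 7 => a7 | 8 => a8 | _ => 0 end)
                     (mu := fun r => match r with 3 => m3 | 4 => m4 | 5 => m5 | 6 => m6 | 7 => m7 | 8 => m8 | _ => 0 end)
                     (w := fun l => match l with 0 => w0 | 1 => w1 | _ => w2 end)) => //.
move=> r /andP [r3 r9].
case: r r3 r9 => [|[|[|[|[|[|[|[|[|]]]]]]]]] // _ _.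
Qed.
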